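(* Let $T$ be a sound arithmetical theory. Then $\mathrm{SA}_{L(T)} + T + \mathrm{IND}(\mathit{sk}^\omega(L(T))) \sqsubseteq_{L(T)} \mathrm{Tr}(L(T))$, i.e. every $L(T)$ sentence provable in $\mathrm{SA}_{L(T)} + T + \mathrm{IND}(\mathit{sk}^\omega(L(T)))$ is true in $\mathbb{N}$.
   Context: An arithmetical language contains $0/0$, $s/1$ and possibly symbols for primitive recursive functions, interpreted naturally in the structure $\mathbb{N}$; an arithmetical theory $T$ is sound if $\mathbb{N}\models T$. $\mathrm{Tr}(L(T))$ is the set of $L(T)$ sentences true in $\mathbb{N}$. $T_1\sqsubseteq_{L} T_2$ means $T_2$ proves every $L$ formula that $T_1$ proves. Skolem symbols $\mathfrak{s}_{Qx\varphi}$ (a new function symbol of arity $|\mathrm{FV}(Qx\varphi)|$ for each formula $Qx\varphi$, $Q\in\{\forall,\exists\}$), $\mathit{sk}^\omega(L)$ is the closure of $L$ under adding these symbols. $\mathrm{SA}_L$: universal closures of $\exists x\varphi(x,\vec y)\to\varphi(\mathfrak{s}_{\exists x\varphi}(\vec y),\vec y)$ and $\varphi(\mathfrak{s}_{\forall x\varphi}(\vec y),\vec y)\to\forall x\varphi(x,\vec y)$ for all $\mathit{sk}^\omega(L)$ formulas $\varphi$. $I_x\varphi=\forall\vec z(\varphi(0,\vec z)\wedge\forall x(\varphi(x,\vec z)\to\varphi(s(x),\vec z))\to\forall x\varphi(x,\vec z))$; $\mathrm{IND}(L')=\{I_x\varphi:\varphi$ an $L'$ formula$\}$. *)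

(* Defs.v *)
From Stdlib Require Import List Arith Lia.
Import ListNotations.

(* Primitive recursive function codes (symbols of an arithmetical      *)
(* language), with their natural interpretation in N.                   *)
Inductive PR : Type :=
| PZero : PR
| PSucc : PR
| PProj : nat -> nat -> PR             (* PProj n i : projection on i-th of n args *)
| PComp : nat -> PR -> list PR -> PR   (* PComp m f gs : f(g1..gk), arity m *)
| PRec  : PR -> PR -> PR.              (* primitive recursion on first argument *)

Fixpoint pr_arity (c : PR) : nat :=
  match c with
  | PZero => 0
  | PSucc => 1
  | PProj n _ => n
  | PComp m _ _ => m
  | PRec g _ => S (pr_arity g)
  end.

Fixpoint pr_wf (c : PR) : Prop :=
  match c with
  | PZero => True
  | PSucc => True
  | PProj n i => i < n
  | PComp m f gs =>
      pr_wf f /\ pr_arity f = length gs /\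
      (fix go (l : list PR) : Prop :=
         match l with nil => True | g :: l' => (pr_wf g /\ pr_arity g = m) /\ go l' end) gs
  | PRec g h => pr_wf g /\ pr_wf h /\ pr_arity h = S (S (pr_arity g))
  end.

Fixpoint pr_eval (c : PR) (v : list nat) : nat :=
  match c with
  | PZero => 0
  | PSucc => S (hd 0 v)
  | PProj _ i => nth i v 0
  | PComp _ f gs => pr_eval f (map (fun g => pr_eval g v) gs)
  | PRec g h =>
      match v with
      | nil => pr_eval g nil
      | x :: ys => nat_rect (fun _ => nat) (pr_eval g ys)
                     (fun k r => pr_eval h (k :: r :: ys)) x
      end
  end.

Definition arith_lang (L : PR -> Prop) : Prop :=
  L PZero /\ L PSucc /\ (forall c, L c -> pr_wf c).

(*   SkEx phi  is the Skolem symbol s_{exists x phi}                     *)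
(*   SkAll phi is the Skolem symbol s_{forall x phi}                     *)
(* (in phi, the bound variable x is de Bruijn index 0).                 *)
Inductive sym : Type :=
| Base  : PR -> sym
| SkEx  : form -> sym
| SkAll : form -> sym
with term : Type :=
| tvar : nat -> term
| tapp : sym -> list term -> term
with form : Type :=
| Ffal : form
| Feq  : term -> term -> form
| Fimp : form -> form -> form
| Fand : form -> form -> form
| For  : form -> form -> form
| Fall : form -> form
| Fex  : form -> form.

Definition tzero : term := tapp (Base PZero) nil.
Definition tsucc (t : term) : term := tapp (Base PSucc) [t].

Fixpoint fv_term (t : term) : list nat :=
  match t with
  | tvar n => [n]
  | tapp _ args =>
      (fix go (l : list term) : list nat :=
         match l with nil => nil | u :: l' => fv_term u ++ go l' end) args
  end.

Fixpoint fv_form (phi : form) : list nat :=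
  match phi with
  | Ffal => nil
  | Feq s t => fv_term s ++ fv_term t
  | Fimp a b | Fand a b | For a b => fv_form a ++ fv_form b
  | Fall a | Fex a => map pred (filter (fun n => 0 <? n) (fv_form a))
  end.

(* sorted, duplicate-free list of the free variables *)
Definition canon (l : list nat) : list nat :=
  filter (fun n => existsb (Nat.eqb n) l) (seq 0 (S (list_max l))).
Definition fvs (phi : form) : list nat := canon (fv_form phi).

Definition closed (phi : form) : Prop := fv_form phi = nil.

Definition sym_arity (f : sym) : nat :=
  match f with
  | Base c => pr_arity c
  | SkEx phi => length (fvs (Fex phi))
  | SkAll phi => length (fvs (Fall phi))
  end.

Fixpoint subst_term (sg : nat -> term) (t : term) : term :=
  match t with
  | tvar n => sg n
  | tapp f args => tapp f (map (subst_term sg) args)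
  end.

Definition shift_term (t : term) : term := subst_term (fun n => tvar (S n)) t.
Definition up (sg : nat -> term) : nat -> term :=
  fun n => match n with 0 => tvar 0 | S m => shift_term (sg m) end.

Fixpoint subst_form (sg : nat -> term) (phi : form) : form :=
  match phi with
  | Ffal => Ffal
  | Feq s t => Feq (subst_term sg s) (subst_term sg t)
  | Fimp a b => Fimp (subst_form sg a) (subst_form sg b)
  | Fand a b => Fand (subst_form sg a) (subst_form sg b)
  | For a b => For (subst_form sg a) (subst_form sg b)
  | Fall a => Fall (subst_form (up sg) a)
  | Fex a => Fex (subst_form (up sg) a)
  end.

Definition scons (t : term) (sg : nat -> term) : nat -> term :=
  fun n => match n with 0 => t | S m => sg m end.
(* phi[t/0], lowering the other free indices by one *)
Definition inst (phi : form) (t : term) : form := subst_form (scons t tvar) phi.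
Definition shift_form (phi : form) : form := subst_form (fun n => tvar (S n)) phi.

(* Languages: sk = false gives L, sk = true gives sk^omega(L).         *)
Fixpoint wf_sym (sk : bool) (L : PR -> Prop) (f : sym) : Prop :=
  match f with
  | Base c => L c
  | SkEx phi => sk = true /\ wf_form sk L phi
  | SkAll phi => sk = true /\ wf_form sk L phi
  end
with wf_term (sk : bool) (L : PR -> Prop) (t : term) : Prop :=
  match t with
  | tvar _ => True
  | tapp f args =>
      wf_sym sk L f /\ length args = sym_arity f /\
      (fix go (l : list term) : Prop :=
         match l with nil => True | u :: l' => wf_term sk L u /\ go l' end) args
  end
with wf_form (sk : bool) (L : PR -> Prop) (phi : form) : Prop :=
  match phi with
  | Ffal => True
  | Feq s t => wf_term sk L s /\ wf_term sk L t
  | Fimp a b | Fand a b | For a b => wf_form sk L a /\ wf_form sk L b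
  | Fall a | Fex a => wf_form sk L a
  end.

Definition L_formula (L : PR -> Prop) (phi : form) : Prop := wf_form false L phi.
Definition skw_formula (L : PR -> Prop) (phi : form) : Prop := wf_form true L phi.
Definition L_sentence (L : PR -> Prop) (phi : form) : Prop :=
  L_formula L phi /\ closed phi.

(* Semantics in the standard model N (only used for L-formulas, where   *)
(* no Skolem symbol occurs; Skolem symbols get a dummy value).          *)
Fixpoint eval_term (rho : nat -> nat) (t : term) : nat :=
  match t with
  | tvar n => rho n
  | tapp (Base c) args => pr_eval c (map (eval_term rho) args)
  | tapp _ _ => 0
  end.

Definition ncons (a : nat) (rho : nat -> nat) : nat -> nat :=
  fun n => match n with 0 => a | S m => rho m end.

Fixpoint sat (rho : nat -> nat) (phi : form) : Prop :=
  match phi with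
  | Ffal => False
  | Feq s t => eval_term rho s = eval_term rho t
  | Fimp a b => sat rho a -> sat rho b
  | Fand a b => sat rho a /\ sat rho b
  | For a b => sat rho a \/ sat rho b
  | Fall a => forall x : nat, sat (ncons x rho) a
  | Fex a => exists x : nat, sat (ncons x rho) a
  end.

Definition true_in_N (phi : form) : Prop := sat (fun _ => 0) phi.

Definition Tr (L : PR -> Prop) (phi : form) : Prop := L_sentence L phi /\ true_in_N phi.

Definition sound (T : form -> Prop) : Prop := forall phi, T phi -> true_in_N phi.

Inductive prv : list form -> form -> Prop :=
| P_ax Γ phi : In phi Γ -> prv Γ phi
| P_impI Γ a b : prv (a :: Γ) b -> prv Γ (Fimp a b)
| P_impE Γ a b : prv Γ (Fimp a b) -> prv Γ a -> prv Γ b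
| P_falE Γ a : prv Γ Ffal -> prv Γ a
| P_andI Γ a b : prv Γ a -> prv Γ b -> prv Γ (Fand a b)
| P_andE1 Γ a b : prv Γ (Fand a b) -> prv Γ a
| P_andE2 Γ a b : prv Γ (Fand a b) -> prv Γ b
| P_orI1 Γ a b : prv Γ a -> prv Γ (For a b)
| P_orI2 Γ a b : prv Γ b -> prv Γ (For a b)
| P_orE Γ a b c : prv Γ (For a b) -> prv (a :: Γ) c -> prv (b :: Γ) c -> prv Γ c
| P_allI Γ a : prv (map shift_form Γ) a -> prv Γ (Fall a)
| P_allE Γ a t : prv Γ (Fall a) -> prv Γ (inst a t)
| P_exI Γ a t : prv Γ (inst a t) -> prv Γ (Fex a)
| P_exE Γ a c : prv Γ (Fex a) -> prv (a :: map shift_form Γ) (shift_form c) -> prv Γ c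
| P_peirce Γ a b : prv Γ (Fimp (Fimp (Fimp a b) a) a)
| P_eqrefl Γ t : prv Γ (Feq t t)
| P_eqelim Γ a s t : prv Γ (Feq s t) -> prv Γ (inst a s) -> prv Γ (inst a t).

Definition provable (Ax : form -> Prop) (phi : form) : Prop :=
  exists Γ : list form, (forall psi, In psi Γ -> Ax psi) /\ prv Γ phi.

Fixpoint alls (k : nat) (phi : form) : form :=
  match k with 0 => phi | S k' => Fall (alls k' phi) end.

Definition univ_closure (psi chi : form) : Prop :=
  exists k, chi = alls k psi /\ closed chi.

Definition sk_args (phi : form) : list term := map tvar (fvs (Fex phi)).

Definition SkEx_ax (phi : form) : form :=
  Fimp (Fex phi) (inst phi (tapp (SkEx phi) (sk_args phi))).
Definition SkAll_ax (phi : form) : form :=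
  Fimp (inst phi (tapp (SkAll phi) (map tvar (fvs (Fall phi))))) (Fall phi).

Definition SA (L : PR -> Prop) (chi : form) : Prop :=
  exists phi, skw_formula L phi /\
    (univ_closure (SkEx_ax phi) chi \/ univ_closure (SkAll_ax phi) chi).

Definition ind_ax (phi : form) : form :=
  Fimp (Fand (inst phi tzero)
             (Fall (Fimp phi (subst_form (scons (tsucc (tvar 0)) (fun n => tvar (S n))) phi))))
       (Fall phi).

Definition IND (Lf : form -> Prop) (chi : form) : Prop :=
  exists phi, Lf phi /\ univ_closure (ind_ax phi) chi.

(* Main.v *)
Require Import Defs.
From Stdlib Require Import List Arith Lia ClassicalEpsilon Classical FunctionalExtensionality.
Import ListNotations.

Fixpoint lookup (l vs : list nat) (n : nat) : nat :=
  match l, vs with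
  | k :: l', v :: vs' => if Nat.eqb n k then v else lookup l' vs' n
  | _, _ => 0
  end.

Fixpoint ev (rho : nat -> nat) (t : term) {struct t} : nat :=
  match t with
  | tvar n => rho n
  | tapp f args =>
     match f with
     | Base c => pr_eval c (map (ev rho) args)
     | SkEx phi => epsilon (inhabits 0)
         (fun x => sv (ncons x (lookup (fvs (Fex phi)) (map (ev rho) args))) phi)
     | SkAll phi => epsilon (inhabits 0)
         (fun x => ~ sv (ncons x (lookup (fvs (Fall phi)) (map (ev rho) args))) phi)
     end
  end
with sv (rho : nat -> nat) (phi : form) {struct phi} : Prop :=
  match phi with
  | Ffal => False
  | Feq s t => ev rho s = ev rho t
  | Fimp a b => sv rho a -> sv rho b
  | Fand a b => sv rho a /\ sv rho b
  | For a b => sv rho a \/ sv rho b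
  | Fall a => forall x : nat, sv (ncons x rho) a
  | Fex a => exists x : nat, sv (ncons x rho) a
  end.

Fixpoint term_ind' (P : term -> Prop) (Hv : forall n, P (tvar n))
  (Ha : forall f args, Forall P args -> P (tapp f args)) (t : term) : P t :=
  match t with
  | tvar n => Hv n
  | tapp f args => Ha f args
      ((fix go (l : list term) : Forall P l :=
         match l with nil => Forall_nil _ | u :: l' => Forall_cons _ (term_ind' P Hv Ha u) (go l') end) args)
  end.

Lemma ev_tapp_ext rho1 rho2 f a1 a2 :
  map (ev rho1) a1 = map (ev rho2) a2 -> ev rho1 (tapp f a1) = ev rho2 (tapp f a2).
Proof. intros H; destruct f; simpl; rewrite H; reflexivity. Qed.

Lemma ev_subst rho sg t : ev rho (subst_term sg t) = ev (fun n => ev rho (sg n)) t.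
Proof.
  induction t as [n|f args IH] using term_ind'; [reflexivity|].
  simpl subst_term. apply ev_tapp_ext. rewrite map_map.
  induction IH; simpl; f_equal; auto.
Qed.

Lemma sv_subst phi : forall rho sg, sv rho (subst_form sg phi) <-> sv (fun n => ev rho (sg n)) phi.
Proof.
  induction phi; intros rho sg; simpl; try tauto.
  - rewrite !ev_subst; tauto.
  - rewrite IHphi1, IHphi2; tauto.
  - rewrite IHphi1, IHphi2; tauto.
  - rewrite IHphi1, IHphi2; tauto.
  - assert (E : forall x, (fun n => ev (ncons x rho) (up sg n)) = ncons x (fun n => ev rho (sg n))).
    { intros x; apply functional_extensionality; intros [|n]; simpl; [reflexivity|].
      unfold shift_term; rewrite ev_subst. simpl. reflexivity. }
    split; intros H x; specialize (H x); [rewrite IHphi, E in H|rewrite IHphi, E]; exact H.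
  - assert (E : forall x, (fun n => ev (ncons x rho) (up sg n)) = ncons x (fun n => ev rho (sg n))).
    { intros x; apply functional_extensionality; intros [|n]; simpl; [reflexivity|].
      unfold shift_term; rewrite ev_subst. simpl. reflexivity. }
    split; intros [x H]; exists x; [rewrite IHphi, E in H|rewrite IHphi, E]; exact H.
Qed.

Lemma sv_inst rho phi t : sv rho (inst phi t) <-> sv (ncons (ev rho t) rho) phi.
Proof.
  unfold inst; rewrite sv_subst.
  replace (fun n => ev rho (scons t tvar n)) with (ncons (ev rho t) rho); [tauto|].
  apply functional_extensionality; intros [|n]; reflexivity.
Qed.

Lemma sv_shift rho x phi : sv (ncons x rho) (shift_form phi) <-> sv rho phi.
Proof.
  unfold shift_form; rewrite sv_subst. simpl. tauto.
Qed.

Lemma ev_coinc t : forall rho1 rho2, (forall n, In n (fv_term t) -> rho1 n = rho2 n) -> ev rho1 t = ev rho2 t.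
Proof.
  induction t as [n|f args IH] using term_ind'; intros rho1 rho2 H.
  - apply H; simpl; auto.
  - apply ev_tapp_ext. simpl in H. induction IH; simpl; [reflexivity|].
    simpl in H. f_equal.
    + apply H0; intros n Hn; apply H; apply in_or_app; auto.
    + apply IHIH; intros n Hn; apply H; apply in_or_app; auto.
Qed.

Lemma sv_coinc phi : forall rho1 rho2, (forall n, In n (fv_form phi) -> rho1 n = rho2 n) -> (sv rho1 phi <-> sv rho2 phi).
Proof.
  assert (B : forall a rho1 rho2, (forall n, In n (fv_form (Fall a)) -> rho1 n = rho2 n) ->
     forall x n, In n (fv_form a) -> ncons x rho1 n = ncons x rho2 n).
  { intros a rho1 rho2 H x [|n] Hn; simpl; [reflexivity|]. apply H. simpl.
    change n with (pred (S n)). apply in_map. apply filter_In. split; auto. }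
  induction phi; intros rho1 rho2 H; simpl in *; try tauto.
  - rewrite (ev_coinc t rho1 rho2), (ev_coinc t0 rho1 rho2); try tauto;
    intros; apply H; apply in_or_app; auto.
  - rewrite (IHphi1 rho1 rho2), (IHphi2 rho1 rho2); try tauto; intros; apply H; apply in_or_app; auto.
  - rewrite (IHphi1 rho1 rho2), (IHphi2 rho1 rho2); try tauto; intros; apply H; apply in_or_app; auto.
  - rewrite (IHphi1 rho1 rho2), (IHphi2 rho1 rho2); try tauto; intros; apply H; apply in_or_app; auto.
  - split; intros H1 x; specialize (H1 x); eapply IHphi; try exact H1;
      intros; first [apply (B phi rho1 rho2 H); auto | symmetry; apply (B phi rho1 rho2 H); auto].
  - split; intros [x H1]; exists x; eapply IHphi; try exact H1;
      intros; first [apply (B phi rho1 rho2 H); auto | symmetry; apply (B phi rho1 rho2 H); auto].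
Qed.

Lemma prv_sound Γ phi : prv Γ phi -> forall rho, (forall psi, In psi Γ -> sv rho psi) -> sv rho phi.
Proof.
  induction 1; intros rho HG; simpl in *.
  - auto.
  - intros Ha; apply IHprv; intros psi [<-|Hp]; auto.
  - apply IHprv1; auto.
  - destruct (IHprv rho HG).
  - split; auto.
  - apply (IHprv rho HG).
  - apply (IHprv rho HG).
  - left; auto.
  - right; auto.
  - destruct (IHprv1 rho HG) as [Ha|Hb].
    + apply IHprv2; intros psi [<-|Hp]; auto.
    + apply IHprv3; intros psi [<-|Hp]; auto.
  - intros x; apply IHprv; intros psi Hp. apply in_map_iff in Hp as [psi' [<- Hp]].
    apply sv_shift; auto.
  - apply sv_inst; apply (IHprv rho HG).
  - exists (ev rho t). apply sv_inst; auto.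
  - destruct (IHprv1 rho HG) as [x Hx].
    apply (sv_shift rho x). apply IHprv2. intros psi [<-|Hp]; auto.
    apply in_map_iff in Hp as [psi' [<- Hp]]. apply sv_shift; auto.
  - intros H1. destruct (classic (sv rho a)); auto. apply H1; intros; contradiction.
  - reflexivity.
  - apply sv_inst. specialize (IHprv2 rho HG). apply sv_inst in IHprv2. specialize (IHprv1 rho HG). rewrite <- IHprv1. auto.
Qed.

Lemma alls_valid k psi : (forall rho, sv rho psi) -> forall rho, sv rho (alls k psi).
Proof. induction k; simpl; auto. Qed.

Lemma lookup_map rho l n : In n l -> lookup l (map rho l) n = rho n.
Proof.
  induction l; simpl; [tauto|]. intros [<-|H].
  - rewrite Nat.eqb_refl; auto.
  - destruct (Nat.eqb_spec n a); subst; auto.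
Qed.

Lemma in_canon n l : In n l -> In n (canon l).
Proof.
  intros H; unfold canon; apply filter_In; split.
  - apply in_seq. split; [lia|]. assert (n <= list_max l).
    { assert (Hf := proj1 (list_max_le l (list_max l)) (le_n _)).
      rewrite Forall_forall in Hf; auto. } lia.
  - apply existsb_exists. exists n; split; auto. apply Nat.eqb_refl.
Qed.

Lemma agree_env rho phi x (Q : form -> form) :
  (forall n, In n (fv_form (Fex phi)) -> In n (fv_form (Q phi))) ->
  sv (ncons x (lookup (fvs (Q phi)) (map rho (fvs (Q phi))))) phi <-> sv (ncons x rho) phi.
Proof.
  intros HQ. apply sv_coinc. intros [|n] Hn; simpl; [reflexivity|].
  apply lookup_map. apply in_canon. apply HQ. simpl.
  change n with (pred (S n)). apply in_map. apply filter_In. split; auto.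
Qed.

Lemma map_ev_tvar rho l : map (ev rho) (map tvar l) = map rho l.
Proof. rewrite map_map; reflexivity. Qed.

Lemma SkEx_valid phi rho : sv rho (SkEx_ax phi).
Proof.
  unfold SkEx_ax. simpl sv. intros [x Hx]. apply sv_inst.
  unfold sk_args. simpl ev. rewrite map_ev_tvar.
  apply (agree_env rho phi _ Fex (fun n H => H)).
  apply epsilon_spec. exists x. apply (agree_env rho phi _ Fex (fun n H => H)). auto.
Qed.

Lemma SkAll_valid phi rho : sv rho (SkAll_ax phi).
Proof.
  unfold SkAll_ax. simpl sv. intros H x. apply sv_inst in H.
  simpl ev in H. rewrite map_ev_tvar in H.
  apply (agree_env rho phi _ Fall (fun n H => H)) in H.
  destruct (classic (sv (ncons x rho) phi)) as [|Hn]; auto. exfalso.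
  assert (Hs := epsilon_spec (inhabits 0)
     (fun x => ~ sv (ncons x (lookup (fvs (Fall phi)) (map rho (fvs (Fall phi))))) phi)).
  simpl in Hs. apply Hs; auto.
  exists x. rewrite (agree_env rho phi _ Fall (fun n H => H)). auto.
Qed.

Lemma ind_valid phi rho : sv rho (ind_ax phi).
Proof.
  unfold ind_ax. simpl sv. intros [H0 HS]. apply sv_inst in H0.
  intros x; induction x.
  - exact H0.
  - specialize (HS x IHx). apply sv_subst in HS.
    replace (fun n => ev (ncons x rho) (scons (tsucc (tvar 0)) (fun n0 => tvar (S n0)) n))
      with (ncons (S x) rho) in HS; auto.
    apply functional_extensionality; intros [|n]; reflexivity.
Qed.

Lemma wf_ev L t : wf_term false L t -> forall rho, ev rho t = eval_term rho t.
Proof.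
  induction t as [n|f args IH] using term_ind'; intros H rho; [reflexivity|].
  simpl in H. destruct H as [Hs [_ Hg]].
  destruct f; simpl in Hs; try (destruct Hs as [Hs _]; discriminate).
  simpl. f_equal. induction IH; simpl; [reflexivity|]. simpl in Hg. destruct Hg.
  f_equal; auto.
Qed.

Lemma wf_sv L phi : wf_form false L phi -> forall rho, sv rho phi <-> sat rho phi.
Proof.
  induction phi; simpl; intros H rho; try tauto.
  - destruct H. rewrite (wf_ev L t), (wf_ev L t0); tauto.
  - destruct H. rewrite IHphi1, IHphi2; tauto.
  - destruct H. rewrite IHphi1, IHphi2; tauto.
  - destruct H. rewrite IHphi1, IHphi2; tauto.
  - split; intros H1 x; apply (IHphi H); auto.
  - split; intros [x H1]; exists x; apply (IHphi H); auto.
Qed.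

Theorem proposition7 (L : PR -> Prop) (T : form -> Prop) :
  arith_lang L ->
  (forall phi, T phi -> L_sentence L phi) ->
  sound T ->
  forall phi : form,
    L_sentence L phi ->
    provable (fun psi => SA L psi \/ T psi \/ IND (skw_formula L) psi) phi ->
    Tr L phi.
Proof.
  intros _ HT Hs phi Hphi [G [HG Hp]]. split; auto.
  unfold true_in_N. apply (wf_sv L phi (proj1 Hphi)).
  apply (prv_sound G phi Hp). intros psi Hin.
  destruct (HG psi Hin) as [[a [_ [[k [-> _]]|[k [-> _]]]]]|[Ht|[a [_ [k [-> _]]]]]].
  - apply alls_valid; intros; apply SkEx_valid.
  - apply alls_valid; intros; apply SkAll_valid.
  - apply (wf_sv L psi (proj1 (HT psi Ht))). apply Hs; auto.
  - apply alls_valid; intros; apply ind_valid.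
Qed.
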